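(* Assume the setup in the context. Then $2\le K\le T$ always holds, and for every outcome with $T\le n-3$: (i) if $K\le T\le \frac{3K+2}{2}$, then $\displaystyle\sum_{i=T+1}^n v_i^2\le U_K(T)\,(1+|X_T|)^2$; (ii) if $\frac{3K+2}{2}\le T$, then $\displaystyle\sum_{i=T+1}^n v_i^2\le U_K\!\left(\tfrac{3K+2}{2}\right)(1+|X_T|)^2$, where $U_K(s):=\dfrac{(K+1)^2-s}{(2K+1)^2}$ for real $s$.
   Context: Let $n\ge4$ and let $v_1,\dots,v_n$ be real numbers with $\sum_{i=1}^n v_i^2\le1$ ordered so that $v_n\ge v_1\ge v_{n-1}\ge v_2\ge v_3\ge\cdots\ge v_{n-2}\ge0$. Let $\epsilon_1,\dots,\epsilon_n$ be independent Rademacher random variables ($\pm1$ with probability $\tfrac12$ each). For $t\in\{1,\dots,n-1\}$ put $X_t:=\sum_{i=1}^t v_i\epsilon_i$ and $Y_t:=\sum_{i=t+1}^n v_i\epsilon_i$, and for $t\in\{1,\dots,n\}$ put $M_t:=\sum_{i=1}^t v_i$. Define the random time $T:=\min\big(\{t\le n-1: |X_t|>1-v_{t+1}\}\cup\{n-1\}\big)$ and the deterministic index $K:=\min\big(\{t\le n-1: M_t>1-v_{t+1}\}\cup\{n-1\}\big)$. *)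

(* Defs.v *)
From Stdlib Require Import Reals Lra Lia List.
Import ListNotations.
Open Scope R_scope.

(* sumR f a b = sum_{i=a}^{b} f i  (empty, i.e. 0, if b < a) *)
Definition sumR (f : nat -> R) (a b : nat) : R :=
  fold_right Rplus 0 (map f (seq a (S b - a))).

Definition Xt (v eps : nat -> R) (t : nat) : R := sumR (fun i => v i * eps i) 1 t.

Definition Mt (v : nat -> R) (t : nat) : R := sumR v 1 t.

Definition is_min_stop (S : nat -> Prop) (N t : nat) : Prop :=
  (1 <= t <= N)%nat /\ (S t \/ t = N) /\
  (forall s, (1 <= s < t)%nat -> ~ S s).

Definition U (K : nat) (s : R) : R :=
  ((INR K + 1) ^ 2 - s) / (2 * INR K + 1) ^ 2.

(* Main.v *)
Require Import Defs.
From Stdlib Require Import Reals Lra Lia List Psatz.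
Import ListNotations.
Open Scope R_scope.

Lemma keyA (k t x : R) : 3 <= k -> k - 1 <= t -> t <= (3*k-1)/2 -> 0 <= x -> k*x <= 1 ->
  1 - 1/k - (t-k)*x^2 <= (k^2-t)/(2*k-1)^2 * (2-x)^2.
Proof.
  intros Hk H1 H2 Hx Hkx.
  set (m := 2*k-1).
  set (E0 := 2*m*k*(3*k-1-2*t)).
  set (E1 := k*(8*k^2-5*k+1-4*k*t)).
  assert (Hm : m > 0) by (unfold m; lra).
  assert (Hid : (k^2-t)/m^2 * (2-x)^2 - (1 - 1/k - (t-k)*x^2)
     = (1-k*x)*((k*x)*E0 + (1-k*x)*E1)/(k^2*m^2)).
  { unfold E0, E1, m. field. lra. }
  assert (HE0 : 0 <= E0).
  { unfold E0. apply Rmult_le_pos; [|lra]. apply Rmult_le_pos; lra. }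
  assert (HE1 : 0 <= E1).
  { unfold E1. apply Rmult_le_pos; [lra|]. nra. }
  assert (0 <= (1-k*x)*((k*x)*E0 + (1-k*x)*E1)/(k^2*m^2)).
  { apply Rmult_le_pos.
    - apply Rmult_le_pos; [lra|]. assert (0 <= k*x) by nra. nra.
    - left. apply Rinv_0_lt_compat. apply Rmult_lt_0_compat; apply pow_lt; lra. }
  lra.
Qed.

Lemma keyB (k t x : R) : 3 <= k -> k - 1 <= t -> 1 <= k*x ->
  1 - t*x^2 <= (k^2-t)/(2*k-1)^2 * (2-x)^2.
Proof.
  intros Hk H1 Hkx.
  set (m := 2*k-1).
  assert (Hm : m > 0) by (unfold m; lra).
  assert (Hid : (k^2-t)/m^2 * (2-x)^2 - (1 - t*x^2)
     = (k*x-1)*(2*m*k*(2*t-k) + (k^2-t+m^2*t)*(k*x-1))/(k^2*m^2)).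
  { unfold m. field. lra. }
  assert (0 <= (k*x-1)*(2*m*k*(2*t-k) + (k^2-t+m^2*t)*(k*x-1))/(k^2*m^2)).
  { apply Rmult_le_pos.
    - apply Rmult_le_pos; [lra|].
      assert (0 <= 2*m*k*(2*t-k)). { assert (0 <= 2*t-k) by lra. apply Rmult_le_pos; [|lra]. apply Rmult_le_pos; lra. }
      assert (0 <= k^2-t+m^2*t). { assert (0 <= (m^2-1)*t) by (apply Rmult_le_pos; unfold m; nra). assert (0 <= k^2) by nra. nra. }
      assert (0 <= (k^2-t+m^2*t)*(k*x-1)) by (apply Rmult_le_pos; lra). lra.
    - left. apply Rinv_0_lt_compat. apply Rmult_lt_0_compat; apply pow_lt; lra. }
  lra.
Qed.

Lemma key (Kr t x S tail Y : R) : 2 <= Kr -> Kr <= t -> t <= (3*Kr+2)/2 -> 0 <= x -> x <= 2 ->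
  tail <= 1 - S -> t*x^2 <= S -> 1/(Kr+1) + (t-(Kr+1))*x^2 <= S -> 2 - x <= Y ->
  tail <= ((Kr+1)^2 - t)/(2*Kr+1)^2 * Y^2.
Proof.
  intros HK H1 H2 Hx0 Hx2 Ht HS1 HS2 HY.
  replace (2*Kr+1) with (2*(Kr+1)-1) by ring.
  assert (Hc : tail <= ((Kr+1)^2 - t)/(2*(Kr+1)-1)^2 * (2-x)^2).
  { destruct (Rle_dec ((Kr+1)*x) 1).
    - pose proof (keyA (Kr+1) t x ltac:(lra) ltac:(lra) ltac:(lra) Hx0 r). lra.
    - pose proof (keyB (Kr+1) t x ltac:(lra) ltac:(lra) ltac:(lra)). nra. }
  assert (0 <= ((Kr+1)^2 - t)/(2*(Kr+1)-1)^2).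
  { apply Rmult_le_pos; [nra|]. left. apply Rinv_0_lt_compat. apply pow_lt; lra. }
  assert ((2-x)^2 <= Y^2) by nra.
  nra.
Qed.
Lemma fr_shift l c : fold_right Rplus c l = fold_right Rplus 0 l + c.
Proof. induction l; simpl; [lra | rewrite IHl; lra]. Qed.

Lemma sumR_empty f a b : (b < a)%nat -> sumR f a b = 0.
Proof. intros. unfold sumR. replace (S b - a)%nat with 0%nat by lia. reflexivity. Qed.

Lemma sumR_S f a b : (a <= S b)%nat -> sumR f a (S b) = sumR f a b + f (S b).
Proof.
  intros. unfold sumR. replace (S (S b) - a)%nat with (S (S b - a)) by lia.
  rewrite seq_S, map_app, fold_right_app.
  replace (a + (S b - a))%nat with (S b) by lia. rewrite fr_shift. cbn [map fold_right]. lra.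
Qed.

Lemma sumR_single f a : sumR f a a = f a.
Proof. unfold sumR. replace (S a - a)%nat with 1%nat by lia. simpl. lra. Qed.

Lemma sumR_le f g a b : (forall i, (a <= i <= b)%nat -> f i <= g i) ->
  sumR f a b <= sumR g a b.
Proof.
  induction b; intros H.
  - destruct a. rewrite !sumR_single. apply H; lia.
    rewrite !sumR_empty by lia. lra.
  - destruct (Compare_dec.le_lt_dec a (S b)).
    + rewrite !sumR_S by lia. assert (f (S b) <= g (S b)) by (apply H; lia).
      assert (sumR f a b <= sumR g a b) by (apply IHb; intros; apply H; lia). lra.
    + rewrite !sumR_empty by lia. lra.
Qed.

Lemma sumR_lb f a b c : (forall i, (a <= i <= b)%nat -> c <= f i) ->
  INR (S b - a) * c <= sumR f a b.
Proof.
  induction b; intros H.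
  - destruct a. rewrite !sumR_single. simpl. assert (c <= f 0%nat) by (apply H; lia). lra.
    rewrite !sumR_empty by lia. replace (1 - S a)%nat with 0%nat by lia. simpl. lra.
  - destruct (Compare_dec.le_lt_dec a (S b)).
    + rewrite !sumR_S by lia. assert (c <= f (S b)) by (apply H; lia).
      assert (INR (S b - a) * c <= sumR f a b) by (apply IHb; intros; apply H; lia).
      replace (S (S b) - a)%nat with (S (S b - a)) by lia. rewrite S_INR. lra.
    + rewrite !sumR_empty by lia. replace (S (S b) - a)%nat with 0%nat by lia. simpl. lra.
Qed.

Lemma sumR_nonneg f a b : (forall i, (a <= i <= b)%nat -> 0 <= f i) -> 0 <= sumR f a b.
Proof.
  intros H. pose proof (sumR_lb f a b 0 H). rewrite Rmult_0_r in H0. exact H0.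
Qed.

Lemma sumR_abs f a b : Rabs (sumR f a b) <= sumR (fun i => Rabs (f i)) a b.
Proof.
  induction b.
  - destruct a. rewrite !sumR_single. lra.
    rewrite !sumR_empty by lia. rewrite Rabs_R0. lra.
  - destruct (Compare_dec.le_lt_dec a (S b)).
    + rewrite !sumR_S by lia. eapply Rle_trans. apply Rabs_triang. lra.
    + rewrite !sumR_empty by lia. rewrite Rabs_R0. lra.
Qed.

Lemma sumR_split f a m b : (a <= S m)%nat -> (m <= b)%nat ->
  sumR f a b = sumR f a m + sumR f (S m) b.
Proof.
  induction b; intros H1 H2.
  - replace m with 0%nat by lia. rewrite (sumR_empty f 1 0) by lia. lra.
  - destruct (Nat.eq_dec m (S b)).
    + subst. rewrite (sumR_empty f (S (S b)) (S b)) by lia. lra.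
    + rewrite !sumR_S by lia. rewrite IHb by lia. lra.
Qed.

Lemma sumR_CS f a b : (sumR f a b)^2 <= INR (S b - a) * sumR (fun i => f i ^ 2) a b.
Proof.
  induction b.
  - destruct a. rewrite !sumR_single. simpl. lra.
    rewrite !sumR_empty by lia. simpl. lra.
  - destruct (Compare_dec.le_lt_dec a (S b)).
    + rewrite !sumR_S by lia.
      replace (S (S b) - a)%nat with (S (S b - a)) by lia. rewrite S_INR.
      set (s := sumR f a b) in *. set (q := sumR (fun i => f i ^ 2) a b) in *.
      set (y := f (S b)). set (nn := INR (S b - a)) in *.
      destruct (Nat.eq_dec (S b - a) 0).
      * assert (s = 0) by (unfold s; apply sumR_empty; lia).
        assert (q = 0) by (unfold q; apply sumR_empty; lia).
        unfold nn. rewrite e. simpl. rewrite H, H0. lra.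
      * assert (Hn : 0 < nn) by (unfold nn; apply lt_0_INR; lia).
        assert (Hq : nn * (q + nn*y^2 - 2*s*y) >= 0) by (pose proof (pow2_ge_0 (s - nn*y)); nra).
        assert (q + nn*y^2 - 2*s*y >= 0).
        { destruct (Rle_dec 0 (q + nn*y^2 - 2*s*y)). lra.
          exfalso. assert (nn * (q + nn*y^2 - 2*s*y) < 0).
          { rewrite Rmult_comm. apply Rmult_neg_pos; lra. } lra. }
        nra.
    + rewrite !sumR_empty by lia. replace (S (S b) - a)%nat with 0%nat by lia. simpl. lra.
Qed.

Theorem mainTheorem6 (n : nat) (v : nat -> R)
  (hn : (4 <= n)%nat)
  (hsq : sumR (fun i => v i ^ 2) 1 n <= 1)
  (h1 : v n >= v 1%nat) (h2 : v 1%nat >= v (n - 1)%nat)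
  (h3 : v (n - 1)%nat >= v 2%nat)
  (h4 : forall i, (2 <= i)%nat -> (i < n - 2)%nat -> v i >= v (S i))
  (h5 : v (n - 2)%nat >= 0)
  (eps : nat -> R) (heps : forall i, (1 <= i <= n)%nat -> eps i = 1 \/ eps i = -1)
  (T K : nat)
  (hT : is_min_stop (fun t => Rabs (Xt v eps t) > 1 - v (S t)) (n - 1) T)
  (hK : is_min_stop (fun t => Mt v t > 1 - v (S t)) (n - 1) K) :
  (2 <= K /\ K <= T)%nat /\
  ((T <= n - 3)%nat ->
     (INR K <= INR T <= (3 * INR K + 2) / 2 ->
        sumR (fun i => v i ^ 2) (S T) n <= U K (INR T) * (1 + Rabs (Xt v eps T)) ^ 2) /\
     ((3 * INR K + 2) / 2 <= INR T ->
        sumR (fun i => v i ^ 2) (S T) n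
          <= U K ((3 * INR K + 2) / 2) * (1 + Rabs (Xt v eps T)) ^ 2)).
Proof.
  destruct hT as [[hT1 hT2] [hTs hTm]].
  destruct hK as [[hK1 hK2] [hKs hKm]].
  set (sq := fun i => v i ^ 2) in *.
  assert (Fch : forall d i, (2 <= i)%nat -> (i + d <= n-2)%nat -> v (i+d)%nat <= v i).
  { induction d; intros i Hi Hd.
    - rewrite Nat.add_0_r. lra.
    - replace (i + S d)%nat with (S (i + d)) by lia.
      assert (v (i+d)%nat >= v (S (i+d))) by (apply h4; lia).
      assert (v (i+d)%nat <= v i) by (apply IHd; lia). lra. }
  assert (Fch' : forall i j, (2 <= i <= j)%nat -> (j <= n-2)%nat -> v j <= v i).
  { intros i j Hi Hj. replace j with (i + (j - i))%nat by lia. apply Fch; lia. }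
  assert (Fnn : forall i, (1 <= i <= n)%nat -> 0 <= v i).
  { intros i Hi.
    assert (v 2%nat >= v (n-2)%nat) by (apply Rle_ge, Fch'; lia).
    destruct (Nat.eq_dec i 1); [subst; lra|].
    destruct (Nat.eq_dec i n); [subst; lra|].
    destruct (Nat.eq_dec i (n-1)); [subst; lra|].
    assert (v (n-2)%nat <= v i) by (apply Fch'; lia). lra. }
  assert (Xle : forall t, (t <= n)%nat -> Rabs (Xt v eps t) <= Mt v t).
  { intros t Ht. unfold Xt, Mt. eapply Rle_trans; [apply sumR_abs|].
    apply sumR_le. intros i Hi. rewrite Rabs_mult.
    rewrite (Rabs_pos_eq (v i)) by (apply Fnn; lia).
    destruct (heps i) as [E|E]; [lia| |]; rewrite E.
    - rewrite Rabs_R1. lra.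
    - rewrite (Rabs_left (-1)) by lra. lra. }
  assert (HKT : (K <= T)%nat).
  { destruct (Compare_dec.le_lt_dec K T); auto. exfalso.
    destruct hTs as [hTs|]; [|lia].
    apply (hKm T); [lia|]. pose proof (Xle T ltac:(lia)). lra. }
  assert (HK2 : (2 <= K)%nat).
  { destruct (Compare_dec.le_lt_dec 2 K); auto. exfalso.
    assert (K = 1%nat) by lia. subst K.
    destruct hKs as [hKs|]; [|lia]. unfold Mt in hKs. rewrite sumR_single in hKs.
    assert (E1 : sumR sq 1 n = sumR sq 1 2 + sumR sq 3 n) by (apply sumR_split; lia).
    assert (E2 : sumR sq 1 2 = sq 1%nat + sq 2%nat).
    { rewrite sumR_S by lia. rewrite sumR_single. reflexivity. }
    assert (E3 : sumR sq 3 n = sumR sq 3 (n-2) + sq (n-1)%nat + sq n).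
    { replace n with (S (S (n-2))) at 1 by lia. rewrite !sumR_S by lia.
      replace (S (S (n-2))) with n by lia. replace (S (n-2)) with (n-1)%nat by lia. reflexivity. }
    assert (E4 : 0 <= sumR sq 3 (n-2)).
    { apply sumR_nonneg. intros. unfold sq. apply pow2_ge_0. }
    assert (0 <= v 1%nat) by (apply Fnn; lia).
    assert (0 <= v 2%nat) by (apply Fnn; lia).
    unfold sq in *. simpl in hKs.
    pose proof (pow2_ge_0 (v 1%nat - v 2%nat)).
    assert (v 2%nat ^2 <= v (n-1)%nat ^2) by nra.
    assert (v 1%nat ^2 <= v n ^2) by nra.
    nra. }
  split; [lia|]. intros HT3.
  assert (SX : Rabs (Xt v eps T) > 1 - v (S T)) by (destruct hTs; [auto|lia]).
  assert (SM : Mt v K > 1 - v (S K)) by (destruct hKs; [auto|lia]).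
  set (x := v (S T)) in *.
  assert (Hx0 : 0 <= x) by (apply Fnn; lia).
  assert (Hx : forall i, (1 <= i <= S T)%nat -> x <= v i).
  { intros i Hi. destruct (Nat.eq_dec i 1).
    - subst. assert (x <= v 2%nat) by (apply Fch'; lia). lra.
    - apply Fch'; lia. }
  assert (Etail : sumR sq 1 n = sumR sq 1 T + sumR sq (S T) n) by (apply sumR_split; lia).
  assert (Hx2 : x^2 <= sumR sq (S T) n).
  { rewrite (sumR_split sq (S T) (S T) n) by lia. rewrite sumR_single.
    assert (0 <= sumR sq (S (S T)) n) by (apply sumR_nonneg; intros; unfold sq; apply pow2_ge_0).
    unfold sq at 1. fold x. lra. }
  assert (Hs0 : 0 <= sumR sq 1 T) by (apply sumR_nonneg; intros; unfold sq; apply pow2_ge_0).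
  assert (Hxle2 : x <= 2) by nra.
  assert (S1 : INR T * x^2 <= sumR sq 1 T).
  { pose proof (sumR_lb sq 1 T (x^2)) as L. replace (S T - 1)%nat with T in L by lia.
    apply L. intros i Hi. unfold sq. assert (x <= v i) by (apply Hx; lia). nra. }
  assert (Mk1 : Mt v (S K) > 1).
  { unfold Mt in *. rewrite sumR_S by lia. lra. }
  assert (CS : (Mt v (S K))^2 <= (INR K + 1) * sumR sq 1 (S K)).
  { pose proof (sumR_CS v 1 (S K)) as C. replace (S (S K) - 1)%nat with (S K) in C by lia.
    rewrite S_INR in C. exact C. }
  assert (HKr : 2 <= INR K) by (apply (le_INR 2) in HK2; simpl in HK2; lra).
  assert (P1 : 1/(INR K + 1) <= sumR sq 1 (S K)).
  { assert (1 <= (INR K + 1) * sumR sq 1 (S K)) by nra.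
    apply (Rmult_le_reg_l (INR K + 1)); [lra|].
    replace ((INR K + 1) * (1 / (INR K + 1))) with 1 by (field; lra). lra. }
  assert (S2 : 1/(INR K + 1) + (INR T - (INR K + 1)) * x^2 <= sumR sq 1 T).
  { destruct (Nat.eq_dec K T).
    - subst K. rewrite sumR_S in P1 by lia. unfold sq at 2 in P1. fold x in P1.
      replace (INR T - (INR T + 1)) with (-1) by ring. lra.
    - rewrite (sumR_split sq 1 (S K) T) by lia.
      pose proof (sumR_lb sq (S (S K)) T (x^2)) as L.
      rewrite minus_INR in L by lia. rewrite !S_INR in L.
      replace (INR T + 1 - (INR K + 1 + 1)) with (INR T - (INR K + 1)) in L by ring.
      assert ((INR T - (INR K + 1)) * x ^ 2 <= sumR sq (S (S K)) T).
      { apply L. intros i Hi. unfold sq. assert (x <= v i) by (apply Hx; lia). nra. }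
      lra. }
  assert (HY : 2 - x <= 1 + Rabs (Xt v eps T)) by lra.
  assert (Htl : sumR sq (S T) n <= 1 - sumR sq 1 T) by lra.
  split.
  - intros [Ha Hb]. unfold U.
    apply (key (INR K) (INR T) x (sumR sq 1 T)); auto.
  - intros Hc. unfold U.
    assert (0 <= x^2) by apply pow2_ge_0.
    apply (key (INR K) ((3 * INR K + 2) / 2) x (sumR sq 1 T)); auto; try lra; nra.
Qed.
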